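(* Let $(a,b,c,\lambda,\delta)\in(\mathbb F^\times)^4\times\mathbb F$. If the $\triangle_q$-module $W_\lambda^\delta(a,b,c)$ is irreducible, then $\delta\ne0$ or $\lambda^2\notin\{q^{2i}: i=0,1,\dots,d'-2\}$.
   Context: $\mathbb F$ is an algebraically closed field and $q\in\mathbb F^\times$ a root of unity of order $d\notin\{1,2,4\}$; $d'=d$ if $d$ odd, $d'=d/2$ if $d$ even. $\triangle_q$ is the unital associative $\mathbb F$-algebra with generators $A,B,C$ subject to: each of $A+\frac{qBC-q^{-1}CB}{q^2-q^{-2}}$, $B+\frac{qCA-q^{-1}AC}{q^2-q^{-2}}$, $C+\frac{qAB-q^{-1}BA}{q^2-q^{-2}}$ is central; $\alpha,\beta,\gamma$ are these times $q+q^{-1}$. For $(a,b,c,\lambda)\in(\mathbb F^\times)^4$, $i\in\mathbb N$: $\theta_i=a\lambda^{-1}q^{2i}+a^{-1}\lambda q^{-2i}$, $\theta_i^*=b\lambda^{-1}q^{2i}+b^{-1}\lambda q^{-2i}$, $\varphi_i=a^{-1}b^{-1}\lambda q(q^i-q^{-i})(\lambda^{-1}q^{i-1}-\lambda q^{1-i})(q^{-i}-abc\lambda^{-1}q^{i-1})(q^{-i}-abc^{-1}\lambda^{-1}q^{i-1})$. $M_\lambda(a,b,c)$ has basis $\{m_i\}_{i\in\mathbb N}$, $(A-\theta_i)m_i=m_{i+1}$, $(B-\theta_i^* )m_i=\varphi_im_{i-1}$, $\alpha,\beta,\gamma$ acting as $(b+b^{-1})(c+c^{-1})+(a+a^{-1})(\lambda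 q+\lambda^{-1}q^{-1})$, $(c+c^{-1})(a+a^{-1})+(b+b^{-1})(\lambda q+\lambda^{-1}q^{-1})$, $(a+a^{-1})(b+b^{-1})+(c+c^{-1})(\lambda q+\lambda^{-1}q^{-1})$. $W_\lambda^\delta(a,b,c)$ is the quotient of $M_\lambda(a,b,c)$ by the span of $\{\delta m_i-m_{d'+i}\}_{i\in\mathbb N}$. *)

(* Defs.v *)
From HB Require Import structures.
From mathcomp Require Import all_boot all_order all_algebra.
Set Implicit Arguments. Unset Strict Implicit. Unset Printing Implicit Defensive.
Import Order.TTheory GRing.Theory.
Local Open Scope ring_scope.

(* The module M_lambda(a,b,c) is modelled on the F-vector space {poly F},
   the basis vector m_i being 'X^i. *)

Section Delta.
Variables (F : fieldType) (q a b c lam : F).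

Definition dprime (d : nat) : nat := if odd d then d else d./2.

Definition theta (i : nat) : F := a / lam * q ^+ (2 * i) + lam / a * q ^- (2 * i).
Definition thetas (i : nat) : F := b / lam * q ^+ (2 * i) + lam / b * q ^- (2 * i).
(* q^{i-1} written as q^i * q^{-1}, q^{1-i} as q * q^{-i} *)
Definition phi (i : nat) : F :=
  (a * b)^-1 * lam * q * (q ^+ i - q ^- i)
  * (lam^-1 * (q ^+ i * q^-1) - lam * (q * q ^- i))
  * (q ^- i - a * b * c / lam * (q ^+ i * q^-1))
  * (q ^- i - a * b / c / lam * (q ^+ i * q^-1)).

(* scalar by which gamma acts *)
Definition gammaM : F :=
  (a + a^-1) * (b + b^-1) + (c + c^-1) * (lam * q + lam^-1 * q^-1).

Definition actA (p : {poly F}) : {poly F} :=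
  \sum_(i < size p) p`_i *: (theta i *: 'X^i + 'X^(i.+1)).
(* action of B : (B - theta*_i) m_i = phi_i m_{i-1}  (phi_0 = 0) *)
Definition actB (p : {poly F}) : {poly F} :=
  \sum_(i < size p) p`_i *: (thetas i *: 'X^i + phi i *: 'X^(i.-1)).
(* action of C, forced by: C + (qAB - q^{-1}BA)/(q^2-q^{-2}) is central and
   acts as gamma/(q+q^{-1}) *)
Definition actC (p : {poly F}) : {poly F} :=
  (gammaM / (q + q^-1)) *: p
  - (q ^+ 2 - q ^- 2)^-1 *: (q *: actA (actB p) - q^-1 *: actB (actA p)).

Definition inN (dp : nat) (delta : F) (p : {poly F}) : Prop :=
  exists s : seq (nat * F),
    p = \sum_(x <- s) x.2 *: (delta *: 'X^(x.1) - 'X^(dp + x.1)).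

Definition subspace (U : {poly F} -> Prop) : Prop :=
  [/\ U 0, (forall p r, U p -> U r -> U (p + r)) & (forall k p, U p -> U (k *: p))].

Definition stable (U : {poly F} -> Prop) : Prop :=
  [/\ (forall p, U p -> U (actA p)), (forall p, U p -> U (actB p))
    & (forall p, U p -> U (actC p))].

(* W = M / N is irreducible: W <> 0, and every submodule of M containing N
   is N or M (correspondence theorem for quotient modules). *)
Definition W_irreducible (dp : nat) (delta : F) : Prop :=
  (exists p, ~ inN dp delta p) /\
  forall U : {poly F} -> Prop,
    subspace U -> (forall p, inN dp delta p -> U p) -> stable U ->
    (forall p, U p -> inN dp delta p) \/ (forall p, U p).

End Delta.

(* Main.v *)
Require Import Defs.
From HB Require Import structures.
From mathcomp Require Import all_boot all_order all_algebra.
From mathcomp Require Import ring zify.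
Import GRing.Theory.
Local Open Scope ring_scope.

Lemma key (F : fieldType) (x lam : F) : x != 0 -> lam != 0 -> lam ^+ 2 = x ^+ 2 ->
  lam^-1 * x - lam * x^-1 = 0.
Proof.
move=> hx hl h.
have -> : lam^-1 * x - lam * x^-1 = (x ^+ 2 - lam ^+ 2) / (lam * x) by field; rewrite hx hl.
by rewrite h subrr mul0r.
Qed.

Section S.
Variables (F : fieldType) (q a b c lam : F) (i : nat).
Hypothesis hphi : phi q a b c lam i.+1 = 0.

Definition U (p : {poly F}) : Prop := forall j, (j <= i)%N -> p`_j = 0.

Lemma UA p : U p -> U (actA q a lam p).
Proof.
move=> hp j hj; rewrite /actA coef_sum big1 // => k _.
rewrite coefZ coefD coefZ !coefXn.
case: (leqP k i) => hk; first by rewrite hp // mul0r.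
have -> : (j == k) = false by apply/negbTE; rewrite neq_ltn (leq_ltn_trans hj hk).
have -> : (j == k.+1) = false by apply/negbTE; rewrite neq_ltn (leq_ltn_trans hj (leq_trans hk (leqnSn _))).
by rewrite mulr0 add0r mulr0.
Qed.

Lemma UB p : U p -> U (actB q a b c lam p).
Proof.
move=> hp j hj; rewrite /actB coef_sum big1 // => k _.
rewrite coefZ coefD coefZ coefZ !coefXn.
case: (leqP k i) => hk; first by rewrite hp // mul0r.
have -> : (j == k) = false by apply/negbTE; rewrite neq_ltn (leq_ltn_trans hj hk).
case: (eqVneq j k.-1) => e; last by rewrite (_ : false%:R = 0 :> F) // !mulr0 addr0 mulr0.
have ek : (k : nat) = i.+1.
  move: hk hj; rewrite e; case: (nat_of_ord k) => //= k' ? ?; lia.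
by rewrite ek hphi (_ : false%:R = 0 :> F) // mulr0 mul0r addr0 mulr0.
Qed.

Lemma UC p : U p -> U (actC q a b c lam p).
Proof.
move=> hp j hj; rewrite /actC coefB !coefZ coefB !coefZ.
by rewrite hp // (UA _ (UB _ hp)) // (UB _ (UA _ hp)) // !mulr0 subrr mulr0 subrr.
Qed.

End S.

Lemma inN0_coef (F : fieldType) (dp : nat) (p : {poly F}) j :
  inN dp 0 p -> (j < dp)%N -> p`_j = 0.
Proof.
move=> [s ->] hj; rewrite coef_sum big1 // => x _.
rewrite coefZ coefB coefZ mul0r coefXn.
have -> : (j == (dp + x.1)%N) = false.
  by apply/negbTE; rewrite neq_ltn (leq_trans hj (leq_addr _ _)).
by rewrite subrr mulr0.
Qed.

Lemma dprime_ge3 d : (0 < d)%N -> d \notin [:: 1%N; 2%N; 4%N] -> (3 <= dprime d)%N.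
Proof.
rewrite /dprime !inE => d0 hd.
case: ifP => od; first by move: d0 od hd; case: d => [|[|[|n]]].
have := odd_double_half d; rewrite od add0n => e.
move: d0 hd; rewrite -e; case: (d./2) => [|[|[|n]]] //.
Qed.

Theorem lemma8p1 (F : closedFieldType) (q : F) (d : nat)
  (hq : d.-primitive_root q) (hd : d \notin [:: 1%N; 2%N; 4%N])
  (a b c lam delta : F)
  (ha : a != 0) (hb : b != 0) (hc : c != 0) (hlam : lam != 0) :
  W_irreducible q a b c lam (dprime d) delta ->
  delta != 0 \/ ~ (exists i : nat, (i <= dprime d - 2)%N /\ lam ^+ 2 = q ^+ (2 * i)).
Proof.
move=> [_ Hirr].
case: (eqVneq delta 0) => [hd0|]; last by left.
right; move=> [i [hi hl]]; subst delta.
have d0 := prim_order_gt0 hq.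
have q0 : q != 0.
  apply/eqP => e; move: (prim_expr_order hq); rewrite e expr0n (gtn_eqF d0) => /eqP.
  by rewrite eq_sym oner_eq0.
have hdp : (i.+1 < dprime d)%N.
  have h3 := @dprime_ge3 d d0 hd.
  lia.
have hphi : phi q a b c lam i.+1 = 0.
  rewrite /phi.
  have -> : q ^+ i.+1 * q^-1 = q ^+ i by rewrite exprSr mulfK.
  have -> : q * q ^- i.+1 = q ^- i by rewrite exprSr invfM mulrCA mulfV // mulr1.
  rewrite (@key _ (q ^+ i) lam) ?expf_neq0 //; first by rewrite !(mulr0, mul0r).
  by rewrite hl -exprM mulnC exprM.
case: (Hirr (@U F i)).
- split; first by move=> j _; rewrite coef0.
  + by move=> p r hp hr j hj; rewrite coefD hp ?hr ?addr0.
  + by move=> k p hp j hj; rewrite coefZ hp ?mulr0.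
- by move=> p hp j hj; apply: inN0_coef hp _; apply: leq_ltn_trans hj (ltnW hdp).
- by split; [apply: UA | apply: (@UB F q a b c lam i hphi) | apply: (@UC F q a b c lam i hphi)].
- move=> h; have := h 'X^(i.+1).
  have hu : @U F i 'X^(i.+1).
    move=> j hj; by rewrite coefXn ltn_eqF ?ltnS.
  move=> /(_ hu) /inN0_coef /(_ hdp). rewrite coefXn eqxx => e.
  by move: (@oner_neq0 F) => /eqP; apply; exact: e.
- move=> h; have := h 1 0%N (leq0n _); rewrite coef1 /= => e.
  by move: (@oner_neq0 F) => /eqP; apply; exact: e.
Qed.
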